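(* When the segment-based (GK) algorithm described in the context is run, after the deletion step at any time step $t$, the number of type-2 elements stored in QS is $O(\ell\log t)$.
   Context: A stream of elements from a totally ordered universe arrives one by one. Let $\ell=1/\varepsilon$ be an integer. The stream is partitioned into consecutive chunks of $\ell$ elements; time step $t$ is the arrival of the $t$-th chunk, and $t_0(x)$ is the time step in which $x$ arrives. The summary QS stores elements $e_1<\dots<e_s$ seen so far, each with integers $\mathrm{rmin}(e),\mathrm{rmax}(e)$; by convention $\mathrm{rmin}(e_0)=0$. An element $+\infty$, larger than all others, is inserted at the start of the stream and is always stored as $e_s$. Insert$(x)$: let $e_i$ be the smallest stored element with $e_i>x$; set $\mathrm{rmin}(x)=\mathrm{rmin}(e_{i-1})+1$, $\mathrm{rmax}(x)=\mathrm{rmax}(e_i)$, increase $\mathrm{rmin}(e_j),\mathrm{rmax}(e_j)$ by one for all $j\ge i$, and store $x$. Delete$(e_i)$: remove $e_i$, leaving all other values unchanged. Define $g_i=\mathrm{rmin}(e_i)-\mathrm{rmin}(e_{i-1})$ and $\Delta_i=\mathrm{rmax}(e_i)-\mathrm{rmin}(e_i)$. Band values: each element $x$ has an integer $\mathbf{v}(x)$: at time step $t_0(x)$, $\mathbf{v}(x)=0$; at each time step $t>t_0(x)$, if $t$ is a multiple of $2^{\mathbf{v}(x)}$ then $\mathbf{v}(x)$ is increased by one. The segment $\mathrm{seg}(e_i)$ of a stored element $e_i$ is the maximal set of consecutive stored elements $e_j,\dots,e_{i-1}$ all with band value strictly less than $\mathbf{v}(e_i)$; $g^*_i=g_i+\sum_{e_k\in\mathrm{seg}(e_i)}g_k$.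 Algorithm: at each time step $t$: (i) run Insert on each element of the chunk; (ii) (deletion step) while there is a stored $e_i$ ($i<s$) with $\mathbf{v}(e_i)\le\mathbf{v}(e_{i+1})$ and $g^*_i+g_{i+1}+\Delta_{i+1}\le t$, run Delete on $e_i$ and on every element of $\mathrm{seg}(e_i)$. After the deletion step at time $t$, a stored element $e_i$ ($i<s$) is type-1 if $\mathbf{v}(e_i)>\mathbf{v}(e_{i+1})$, and type-2 if it is not type-1 (in which case $g^*_i+g_{i+1}+\Delta_{i+1}>t$). *)

(* Defs.v *)
From mathcomp Require Import all_boot all_order all_algebra.
Set Implicit Arguments. Unset Strict Implicit. Unset Printing Implicit Defensive.
Import Order.TTheory GRing.Theory Num.Theory.

Section GK.
Variables (disp : Order.disp_t) (T : orderType disp).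

(* A stored element: its value (None = +infinity), rmin, rmax, and the
   time step t0 in which it arrived. *)
Record entry := Entry { ev : option T; ermin : nat; ermax : nat; et0 : nat }.

(* +infinity: inserted at the start of the stream (time step 0),
   rmin = rmax = 1 (it is the only element seen so far). *)
Definition inf_entry : entry := Entry None 1 1 0.

Definition gtx (x : T) (e : entry) : bool :=
  if ev e is Some y then (x < y)%O else true.

Definition dflt_entry : entry := inf_entry.
Definition Q_at (Q : seq entry) (i : nat) : entry := nth dflt_entry Q i.

(* Insert(x); positions are 0-based: position p is e_{p+1}. *)
Definition insert_elem (t : nat) (x : T) (Q : seq entry) : seq entry :=
  let i := find (gtx x) Q in
  let rmin_prev := if i is i'.+1 then ermin (Q_at Q i') else 0 in
  let newe := Entry (Some x) rmin_prev.+1 (ermax (Q_at Q i)) t in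
  let incr e := Entry (ev e) (ermin e).+1 (ermax e).+1 (et0 e) in
  take i Q ++ newe :: map incr (drop i Q).

Definition insert_chunk (t : nat) (c : seq T) (Q : seq entry) : seq entry :=
  foldl (fun Q x => insert_elem t x Q) Q c.

Fixpoint band (t0 t : nat) : nat :=
  match t with
  | 0 => 0
  | t'.+1 => let v := band t0 t' in
             if (t0 < t'.+1) && (2 ^ v %| t'.+1) then v.+1 else v
  end.

Definition bandQ (t : nat) (Q : seq entry) (p : nat) : nat := band (et0 (Q_at Q p)) t.

Definition prev_rmin (Q : seq entry) (p : nat) : nat :=
  if p is p'.+1 then ermin (Q_at Q p') else 0.

Definition gQ (Q : seq entry) (p : nat) : int :=
  (ermin (Q_at Q p))%:Z - (prev_rmin Q p)%:Z.
Definition DeltaQ (Q : seq entry) (p : nat) : int :=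
  (ermax (Q_at Q p))%:Z - (ermin (Q_at Q p))%:Z.

(* seg(e_p) = positions segstart..p-1: maximal run of consecutive stored
   elements immediately before p with band value < band value of p. *)
Definition segstart (t : nat) (Q : seq entry) (p : nat) : nat :=
  p - find (fun e => ~~ (band (et0 e) t < bandQ t Q p)) (rev (take p Q)).

Definition gstarQ (t : nat) (Q : seq entry) (p : nat) : int :=
  gQ Q p + \sum_(segstart t Q p <= k < p) gQ Q k.

Definition del_step (t : nat) (Q Q' : seq entry) : Prop :=
  exists p, [/\ p.+1 < size Q,
     bandQ t Q p <= bandQ t Q p.+1,
     (gstarQ t Q p + gQ Q p.+1 + DeltaQ Q p.+1 <= t%:Z)%R &
     Q' = take (segstart t Q p) Q ++ drop p.+1 Q].

Inductive del_star (t : nat) : seq entry -> seq entry -> Prop :=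
| del_refl Q : del_star t Q Q
| del_trans Q1 Q2 Q3 : del_step t Q1 Q2 -> del_star t Q2 Q3 -> del_star t Q1 Q3.

Definition deletion_phase (t : nat) (Q Q' : seq entry) : Prop :=
  del_star t Q Q' /\ forall Q'', ~ del_step t Q' Q''.

(* t-th chunk (t >= 1) of the stream *)
Definition chunk (l : nat) (stream : nat -> T) (t : nat) : seq T :=
  [seq stream ((t.-1) * l + j) | j <- iota 0 l].

(* Qs t = content of QS after the deletion step of time step t. *)
Definition valid_run (l : nat) (stream : nat -> T) (Qs : nat -> seq entry) : Prop :=
  Qs 0 = [:: inf_entry] /\
  forall t, 0 < t ->
    deletion_phase t (insert_chunk t (chunk l stream t) (Qs t.-1)) (Qs t).

(* type-2 elements: stored e_p (not the last one) that are not type-1 *)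
Definition num_type2 (t : nat) (Q : seq entry) : nat :=
  count (fun p => ~~ (bandQ t Q p.+1 < bandQ t Q p)) (iota 0 (size Q).-1).

End GK.

(* Main.v *)
Require Import Defs.
From mathcomp Require Import all_boot all_order all_algebra.
From mathcomp Require Import zify ring lra.
Import Order.TTheory GRing.Theory Num.Theory.
Set Implicit Arguments. Unset Strict Implicit. Unset Printing Implicit Defensive.

Lemma bandS s t : band s t.+1 =
  if (s < t.+1) && (2 ^ band s t %| t.+1) then (band s t).+1 else band s t.
Proof. by []. Qed.

Lemma band_le0 s t : t <= s -> band s t = 0.
Proof.
elim: t => [//|t IH] H; rewrite bandS IH; last by lia.
have -> : (s < t.+1) = false by lia.
by [].
Qed.

Definition shiftP (tt v b : nat) : bool :=
  if 2 ^ v %| tt then (0 < v) && (b <= v.-1) else b <= v.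

Lemma band_shift s t v : s < t.+1 ->
  (band s t.+1 <= v) = shiftP t.+1 v (band s t).
Proof.
move=> st; rewrite bandS st /= /shiftP.
set b := band s t.
case Hv: (2 ^ v %| t.+1); case Hb: (2 ^ b %| t.+1).
- by apply/idP/idP; lia.
- case: (ltngtP b v) => [bv|bv|bv]; [|lia|by move: Hv Hb; rewrite bv => ->].
  apply/idP/idP; lia.
- case: (ltngtP b v) => [bv|bv|bv]; [|lia|by move: Hv Hb; rewrite bv => ->].
  apply/idP/idP; lia.
- by [].
Qed.

Lemma dvd_between k a b : 0 < k -> k %| a -> k %| b -> a < b -> a + k <= b.
Proof.
move=> k0 /dvdnP [x ->] /dvdnP [y ->] lt.
have : x < y by rewrite ltn_pmul2r in lt.
move=> xy; rewrite -mulSnr leq_pmul2r //.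
Qed.

Lemma band_up_aux s t : s <= t -> exists N,
  [/\ 2 ^ band s t %| N, t < N, N <= t + 2 ^ band s t & N < s + 2 ^ (band s t).+1].
Proof.
elim: t => [|t IH] st.
  have -> : s = 0 by lia.
  by exists 1; rewrite band_le0.
case: (leqP s t) => st'; last first.
  have -> : s = t.+1 by lia.
  rewrite band_le0 //; exists t.+2; rewrite expn0 expn1 dvd1n; split => //; lia.
have [N [dN tN Nt Ns]] := IH st'.
rewrite bandS (_ : s < t.+1 = true); last by lia.
set b := band s t in dN tN Nt Ns *.
have k0 : 0 < 2 ^ b by rewrite expn_gt0.
case Hb: (2 ^ b %| t.+1) => /=.
  have NE : N = t.+1.
    have := dvd_between k0 Hb dN; have := dvd_between k0 dN Hb.
    lia.
  subst N.
  case H2: (2 ^ b.+1 %| t.+1).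
    exists (t.+1 + 2 ^ b.+1); split.
    - by rewrite dvdn_addr.
    - have := expn_gt0 2 b.+1; lia.
    - lia.
    - rewrite !expnS in Ns *; lia.
  exists (t.+1 + 2 ^ b); split.
  - move: Hb H2 => /dvdnP [x ->]; rewrite expnS.
    rewrite -mulSnr !dvdn_pmul2r // !dvdn2 /=.
    by case: (odd x).
  - lia.
  - rewrite expnS; lia.
  - rewrite !expnS in Ns *; lia.
exists N; split => //.
- case: (ltngtP t.+1 N) => //; [lia| move=> E; by rewrite E dN in Hb].
- lia.
Qed.

Lemma band_up s t : s <= t -> t - s + 2 <= 2 ^ (band s t).+1.
Proof. move=> st; have [N [_ tN _ Ns]] := band_up_aux st; lia. Qed.

Lemma band_low_aux s t : s <= t -> band s t = 0 \/ exists T,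
  [/\ T <= t, 2 ^ (band s t).-1 %| T & s + 2 ^ (band s t).-1 <= T].
Proof.
elim: t => [|t IH] st.
  by left; rewrite band_le0.
case: (leqP s t) => st'; last first.
  by left; rewrite band_le0 //; lia.
rewrite bandS (_ : s < t.+1 = true); last by lia.
set b := band s t in IH *.
case Hb: (2 ^ b %| t.+1) => /=.
  right; exists t.+1; split => //.
  case: (IH st') => [b0|[T [Tt dT sT]]].
    rewrite b0 expn0; lia.
  clear IH; move: Hb dT sT; rewrite /b; clear b; case: (band s t) => [|b] Hb dT sT /=.
    rewrite expn0; lia.
  have H1 : 2 ^ b %| t.+1 by apply: dvdn_trans Hb; rewrite expnS dvdn_mull.
  have := dvd_between (expn_gt0 2 b) dT H1.
  simpl in sT |- *; rewrite expnS; lia.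
case: (IH st') => [b0|[T [Tt dT sT]]]; [by left|right; exists T; split => //; lia].
Qed.

Lemma band_low s t : s <= t -> 2 ^ band s t <= (t - s).*2.+1.
Proof.
move=> st; case: (band_low_aux st) => [->|[T [Tt _ sT]]]; first by rewrite expn0.
case: (band s t) sT => [|b] sT; first by rewrite expn0.
rewrite expnS /=; simpl in sT; lia.
Qed.
Definition trip := (int * int * nat)%type.

Fixpoint vw disp (T : orderType disp) (c : nat) (Q : seq (entry T)) : seq trip :=
  match Q with
  | [::] => [::]
  | e :: Q' => (((ermin e)%:Z - c%:Z)%R, ((ermax e)%:Z - (ermin e)%:Z)%R, et0 e) :: vw (ermin e) Q'
  end.

Section V.
Context (disp : Order.disp_t) (T : orderType disp).
Implicit Types (Q A B : seq (entry T)).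

Lemma vw_size c Q : size (vw c Q) = size Q.
Proof. by elim: Q c => //= e Q IH c; rewrite IH. Qed.

Lemma vw_cat c A B : vw c (A ++ B) = vw c A ++ vw (last c (map (@ermin _ T) A)) B.
Proof. by elim: A c => //= e A IH c; rewrite IH. Qed.

Definition incr (e : entry T) := Entry (ev e) (ermin e).+1 (ermax e).+1 (et0 e).

Lemma vw_incr c B : vw c.+1 (map incr B) = vw c B.
Proof.
elim: B c => //= e B IH c; rewrite IH; congr ((_, _, _) :: _).
- lia.
- lia.
Qed.

Lemma vw_sumg c A : (\sum_(y <- vw c A) y.1.1 = (last c (map (@ermin _ T) A))%:Z - c%:Z)%R.
Proof.
elim: A c => [|e A IH] c /=; first by rewrite big_nil subrr.
by rewrite big_cons IH /=; ring.
Qed.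

Lemma vw_t0 c A : map snd (vw c A) = map (@et0 _ T) A.
Proof. by elim: A c => //= e A IH c; rewrite IH. Qed.

Lemma nth_vw_gen c Q k : k < size Q -> nth (0%R, 0%R, 0) (vw c Q) k =
  (((ermin (Q_at Q k))%:Z - (if k is k'.+1 then ermin (Q_at Q k') else c)%:Z)%R,
   ((ermax (Q_at Q k))%:Z - (ermin (Q_at Q k))%:Z)%R, et0 (Q_at Q k)).
Proof.
elim: Q c k => //= e Q IH c [|k] //= lt.
rewrite IH //; case: k lt => //.
Qed.

Lemma nth_vw Q k : k < size Q -> nth (0%R, 0%R, 0) (vw 0 Q) k =
  (gQ Q k, DeltaQ Q k, et0 (Q_at Q k)).
Proof. by move=> lt; rewrite nth_vw_gen //; case: k lt. Qed.

Lemma last_take Q k : k <= size Q -> last 0 (map (@ermin _ T) (take k Q)) = prev_rmin Q k.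
Proof.
case: k => [|k] lt; first by rewrite take0.
rewrite -(nth_last 0) size_map size_take.
rewrite (_ : (if k.+1 < size Q then k.+1 else size Q) = k.+1); last by case: ltnP => //; lia.
rewrite [k.+1.-1]/= (@nth_map _ (@dflt_entry disp T) _ 0); last by rewrite size_takel.
by rewrite nth_take.
Qed.


Lemma vw_insert t x Q : exists Vt Vd (dx : int),
  [/\ vw 0 Q = Vt ++ Vd, vw 0 (insert_elem t x Q) = Vt ++ (1%R, dx, t) :: Vd &
     (dx <= 0)%R \/ exists h Vd', Vd = h :: Vd' /\ dx = (h.1.1 + h.1.2 - 1)%R ].
Proof.
rewrite /insert_elem.
set i := find (gtx x) Q.
have iQ : i <= size Q by apply: find_size.
exists (vw 0 (take i Q)), (vw (prev_rmin Q i) (drop i Q)),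
  ((ermax (Q_at Q i))%:Z - (prev_rmin Q i).+1%:Z)%R; split.
- by rewrite -{1}(cat_take_drop i Q) vw_cat last_take.
- rewrite vw_cat last_take //=.
  rewrite (_ : (if i is i'.+1 then ermin (Q_at Q i') else 0) = prev_rmin Q i) //.
  rewrite (vw_incr (prev_rmin Q i) (drop i Q)).
  congr (_ ++ (_, _, _) :: _); lia.
- case: (ltnP i (size Q)) => iQ'.
    right; rewrite (drop_nth (@dflt_entry disp T) iQ') /=.
    eexists; eexists; split; first by reflexivity.
    rewrite /= /Q_at; lia.
  left; rewrite /Q_at nth_default //=; lia.
Qed.


Lemma vw_delete ss p Q : ss <= p -> p.+1 < size Q ->
  let M := vw (prev_rmin Q ss) (drop ss (take p.+2 Q)) in
  [/\ vw 0 Q = vw 0 (take ss Q) ++ M ++ vw (ermin (Q_at Q p.+1)) (drop p.+2 Q),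
      vw 0 (take ss Q ++ drop p.+1 Q) = vw 0 (take ss Q) ++
         (((ermin (Q_at Q p.+1))%:Z - (prev_rmin Q ss)%:Z)%R, DeltaQ Q p.+1, et0 (Q_at Q p.+1))
         :: vw (ermin (Q_at Q p.+1)) (drop p.+2 Q),
      (\sum_(y <- M) y.1.1 = (ermin (Q_at Q p.+1))%:Z - (prev_rmin Q ss)%:Z)%R &
      map snd M = map (@et0 _ T) (drop ss (take p.+2 Q))].
Proof.
move=> sp pQ M.
have E1 : take ss Q = take ss (take p.+2 Q) by rewrite take_takel //; lia.
have L1 : last 0 (map (@ermin _ T) (take ss Q)) = prev_rmin Q ss by rewrite last_take //; lia.
have L2 : last 0 (map (@ermin _ T) (take p.+2 Q)) = ermin (Q_at Q p.+1) by rewrite last_take.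
split.
- rewrite -{1}(cat_take_drop p.+2 Q) vw_cat L2.
  rewrite -{1}(cat_take_drop ss (take p.+2 Q)) vw_cat -E1 L1 catA //.
- rewrite vw_cat L1 (drop_nth (@dflt_entry disp T) pQ) /=.
  by [].
- rewrite vw_sumg; congr (_%:Z - _)%R.
  rewrite -L2 -{2}(cat_take_drop ss (take p.+2 Q)) map_cat last_cat -E1 L1 //.
- by rewrite vw_t0.
Qed.

Lemma seg_band t Q p k : p <= size Q -> segstart t Q p <= k < p ->
  band (et0 (Q_at Q k)) t < bandQ t Q p.
Proof.
move=> pQ /andP [sk kp].
move: sk; rewrite /segstart.
set a := (fun e : entry T => ~~ (band (et0 e) t < bandQ t Q p)).
set L := rev (take p Q).
have sL : size L = p by rewrite size_rev size_takel.
have fL : find a L <= p by rewrite -sL find_size.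
move=> sk.
have j_lt : p.-1 - k < find a L by lia.
have := before_find (@dflt_entry disp T) j_lt.
rewrite /L nth_rev ?size_takel //; last by lia.
rewrite nth_take; last by lia.
rewrite (_ : p - (p.-1 - k).+1 = k); last by lia.
by rewrite /a => /negbFE.
Qed.

End V.
Goal forall (a c : nat), (((a.+1)%:Z - (c.+1)%:Z)%R = (a%:Z - c%:Z)%R).
move=> a c. Set Printing All. idtac.
Abort.

Open Scope ring_scope.
#[global] Arguments Q_at : simpl never.

Definition Wsum (V : seq trip) (tb v : nat) : int :=
  \sum_(x <- V | (band x.2 tb <= v)%N) x.1.1.
Definition Bnd (l tb tc v : nat) : nat :=
  ((band 0 tb <= v) + l * count (fun s => band s tb <= v) (iota 1 tc))%N.
Definition Inv (l Gm tb tc k : nat) (V : seq trip) : Prop :=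
  [/\ all (fun x : trip => 0 <= x.1.1) V,
      all (fun x : trip => x.1.1 + x.1.2 <= Gm%:Z) V,
      all (fun x : trip => x.1.2 + 1 <= (maxn x.2 1)%:Z) V,
      all (fun x : trip => (x.2 <= tb)%N) V &
      forall v, Wsum V tb v <= (Bnd l tb tc v + k)%:Z ].

Lemma Wsum_cat A B tb v : Wsum (A ++ B) tb v = Wsum A tb v + Wsum B tb v.
Proof. by rewrite /Wsum big_cat. Qed.

Lemma Wsum_cons x B tb v : Wsum (x :: B) tb v =
  (if (band x.2 tb <= v)%N then x.1.1 else 0) + Wsum B tb v.
Proof. by rewrite /Wsum big_cons; case: ifP; rewrite ?add0r. Qed.

Lemma Inv_weak l Gm Gm' tb tc k V : (Gm <= Gm')%N -> Inv l Gm tb tc k V -> Inv l Gm' tb tc k V.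
Proof.
move=> le [H1 H2 H3 H4 H5]; split => //.
apply/allP => x xV; have := allP H2 x xV => /= h; lia.
Qed.

Lemma Inv_insert l Gm t tc k disp (T : orderType disp) (x : T) Q :
  (1 <= Gm <= t)%N -> Inv l Gm t tc k (vw 0 Q) -> Inv l Gm t tc k.+1 (vw 0 (insert_elem t x Q)).
Proof.
move=> /andP [G1 Gt] [H1 H2 H3 H4 H5].
have [Vt [Vd [dx [EV EV' Hdx]]]] := vw_insert t x Q.
rewrite EV in H1 H2 H3 H4 H5; rewrite EV'.
have Hd : dx + 1 <= Gm%:Z.
  case: Hdx => [|[h [Vd' [EVd ->]]]]; first by lia.
  move: H2; rewrite EVd all_cat /= => /andP [_ /andP [hh _]]; lia.
move: H1 H2 H3 H4; rewrite !all_cat /= => /andP[A1 B1] /andP[A2 B2] /andP[A3 B3] /andP[A4 B4].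
split; rewrite ?all_cat /= ?A1 ?B1 ?A2 ?B2 ?A3 ?B3 ?A4 ?B4 //=.
- rewrite andbT; lia.
- rewrite andbT; lia.
- by rewrite leqnn.
- move=> v; move: (H5 v); rewrite !Wsum_cat Wsum_cons band_le0 //= => h.
  rewrite PoszD; lia.
Qed.

Lemma Inv_chunk l Gm t tc disp (T : orderType disp) (c : seq T) : forall k Q,
  (1 <= Gm <= t)%N -> Inv l Gm t tc k (vw 0 Q) ->
  Inv l Gm t tc (k + size c) (vw 0 (insert_chunk t c Q)).
Proof.
elim: c => [|x c IH] k Q G HI; first by rewrite addn0.
rewrite /insert_chunk /= -/(insert_chunk t c _) -addSnnS.
by apply: IH => //; apply: Inv_insert.
Qed.

Lemma Inv_shift l Gm t V : Inv l Gm t t 0 V -> Inv l Gm t.+1 t 0 V.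
Proof.
move=> [H1 H2 H3 H4 H5]; split => //.
  by apply/allP => x xV; have := allP H4 x xV => /= h; lia.
move=> v.
have EW : Wsum V t.+1 v = \sum_(x <- V | shiftP t.+1 v (band x.2 t)) x.1.1.
  rewrite /Wsum big_seq_cond [RHS]big_seq_cond; apply: eq_bigl => x.
  case xV: (x \in V) => //=; rewrite band_shift //.
  by have := allP H4 x xV.
have EB : Bnd l t.+1 t v = (shiftP t.+1 v (band 0 t) +
    l * count (fun s => shiftP t.+1 v (band s t)) (iota 1 t))%N.
  rewrite /Bnd band_shift //; congr (_ + l * _)%N.
  apply: eq_in_count => s; rewrite mem_iota => /andP [s1 s2].
  by rewrite band_shift //; lia.
rewrite EW EB addn0 /shiftP; case: ifP => _.
  case: v {EW EB} => [|v] /=.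
    by rewrite big_pred0.
  by have := H5 v; rewrite addn0.
by have := H5 v; rewrite addn0.
Qed.

Lemma Inv_fin l Gm t V : Inv l Gm t.+1 t l V -> Inv l Gm t.+1 t.+1 0 V.
Proof.
move=> [H1 H2 H3 H4 H5]; split => // v.
have -> : (Bnd l t.+1 t.+1 v + 0 = Bnd l t.+1 t v + l)%N.
  rewrite /Bnd -addn1 iotaD count_cat /= (@band_le0 (1 + t)) ?leq0n /=; lia.
exact: H5.
Qed.

Lemma Inv_init l disp (T : orderType disp) : Inv l 1 0 0 0 (vw 0 [:: @inf_entry disp T]).
Proof.
split => // v; rewrite /Wsum /Bnd /= big_cons big_nil /=; lia.
Qed.

Lemma tele disp (T : orderType disp) (Q : seq (entry T)) a b : (a <= b)%N ->
  \sum_(a <= k < b) gQ Q k = (prev_rmin Q b)%:Z - (prev_rmin Q a)%:Z.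
Proof.
elim: b => [|b IH] ab.
  have -> : a = 0%N by lia.
  by rewrite big_geq // subrr.
case: (ltnP b a) => ba.
  have -> : a = b.+1 by lia.
  by rewrite big_geq // subrr.
rewrite big_nat_recr //= IH // /gQ /=; lia.
Qed.

Lemma gstar_eq disp (T : orderType disp) t (Q : seq (entry T)) p :
  gstarQ t Q p + gQ Q p.+1 = (ermin (Q_at Q p.+1))%:Z - (prev_rmin Q (segstart t Q p))%:Z.
Proof.
rewrite /gstarQ tele ?leq_subr //= /gQ /=; lia.
Qed.

Lemma seg_le disp (T : orderType disp) t (Q : seq (entry T)) p k :
  (p.+1 < size Q)%N -> (bandQ t Q p <= bandQ t Q p.+1)%N ->
  (segstart t Q p <= k <= p.+1)%N -> (band (et0 (Q_at Q k)) t <= bandQ t Q p.+1)%N.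
Proof.
move=> pQ bp /andP [sk kp].
case: (ltngtP k p) => [kp'|kp'|->] //.
- have := @seg_band _ _ t Q p k (ltnW (ltnW pQ)); rewrite sk kp' => /(_ isT); lia.
- by have -> : k = p.+1 by lia.
Qed.

Lemma Inv_del l t disp (T : orderType disp) (Q Q' : seq (entry T)) :
  del_step t Q Q' -> Inv l t t t 0 (vw 0 Q) -> Inv l t t t 0 (vw 0 Q').
Proof.
case=> p [pQ bp cond ->] [H1 H2 H3 H4 H5].
set ss := segstart t Q p.
have sp : (ss <= p)%N by apply: leq_subr.
have szV : size (vw 0 Q) = size Q by rewrite vw_size.
have N3 := (all_nthP (0, 0, 0%N) H3 p.+1); rewrite szV nth_vw // in N3; have {N3} N3 := N3 pQ.
have N4 := (all_nthP (0, 0, 0%N) H4 p.+1); rewrite szV nth_vw // in N4; have {N4} N4 := N4 pQ.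
have [E1 E2 E3 E4] := vw_delete sp pQ.
set M := vw (prev_rmin Q ss) (drop ss (take p.+2 Q)) in E1 E3 E4.
have Mb : forall y, y \in M -> (band y.2 t <= bandQ t Q p.+1)%N.
  move=> y yM; have : y.2 \in map snd M by apply: map_f.
  rewrite E4 => /(nthP 0%N) [i]; rewrite size_map size_drop size_takel // => ilt <-.
  rewrite (nth_map (@dflt_entry disp T)) ?size_drop ?size_takel //.
  rewrite nth_drop nth_take; last by lia.
  apply: seg_le => //; rewrite /ss; lia.
have gs := gstar_eq t Q p; rewrite -/ss in gs.
rewrite E1 !all_cat in H1 H2 H3 H4; rewrite E1 in H5; rewrite E2.
move: H1 H2 H3 H4 => /and3P [A1 M1 B1] /and3P [A2 M2 B2] /and3P [A3 M3 B3] /and3P [A4 M4 B4].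
have Mg : 0 <= \sum_(y <- M) y.1.1.
  by rewrite big_seq; apply: sumr_ge0 => y yM; have := allP M1 y yM.
split; rewrite ?all_cat /= ?A1 ?B1 ?A2 ?B2 ?A3 ?B3 ?A4 ?B4 ?andbT //=.
- by rewrite -E3.
- by move: cond; rewrite -gs.
- move=> v; have := H5 v; rewrite !Wsum_cat Wsum_cons /=.
  case: ifP => bv.
    suff -> : Wsum M t v = (ermin (Q_at Q p.+1))%:Z - (prev_rmin Q ss)%:Z by [].
    rewrite -E3 /Wsum big_seq_cond [RHS]big_seq_cond.
    apply/eq_bigl => y; case yM: (y \in M) => //=.
    by rewrite (leq_trans (Mb y yM)).
  suff : 0 <= Wsum M t v by lia.
  rewrite /Wsum big_seq_cond; apply: sumr_ge0 => y /andP [yM _].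
  by have := allP M1 y yM.
Qed.

Lemma Inv_star l t disp (T : orderType disp) (Q Q' : seq (entry T)) :
  del_star t Q Q' -> Inv l t t t 0 (vw 0 Q) -> Inv l t t t 0 (vw 0 Q').
Proof. by elim=> // Q1 Q2 Q3 D _ IH HI; apply: IH; apply: Inv_del D HI. Qed.

Lemma Inv_run l disp (T : orderType disp) (stream : nat -> T) Qs :
  valid_run l stream Qs -> forall t, Inv l (maxn t 1) t t 0 (vw 0 (Qs t)).
Proof.
move=> [E0 H]; elim=> [|t IH]; first by rewrite E0; apply: Inv_init.
have [D _] := H t.+1 isT.
have I1 := Inv_shift IH.
have G : (1 <= maxn t 1 <= t.+1)%N by apply/andP; split; lia.
have I2 := Inv_chunk (chunk l stream t.+1) G I1.
rewrite add0n size_map size_iota in I2.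
have I3 := Inv_fin I2.
have G' : (maxn t 1 <= t.+1)%N by lia.
have I4 := Inv_weak G' I3.
have -> : maxn t.+1 1 = t.+1 by lia.
exact: Inv_star D I4.
Qed.

Close Scope ring_scope.

Lemma sub_in_count (T : eqType) (a1 a2 : pred T) (s : seq T) :
  (forall x, x \in s -> a1 x -> a2 x) -> count a1 s <= count a2 s.
Proof.
elim: s => //= x s IH H.
apply: leq_add; last by apply: IH => y ys; apply: H; rewrite inE ys orbT.
case a1x: (a1 x) => //=; by rewrite H // inE eqxx.
Qed.

Lemma count_le2 (C : pred nat) a m :
  (forall p q, a <= p -> p < q -> q < a + m -> C p -> C q -> q = p.+1) ->
  count C (iota a m) <= 2.
Proof.
elim: m a => [|m IH] a H //=.
case Ca: (C a) => /=; last first.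
  apply: IH => p q ap pq qm; apply: H; lia.
suff : count C (iota a.+1 m) <= 1 by [].
apply: (@leq_trans (count (pred1 a.+1) (iota a.+1 m))).
  apply: sub_in_count => q; rewrite mem_iota => /andP [q1 q2] Cq /=.
  by rewrite (H a q) //; lia.
by rewrite count_uniq_mem ?iota_uniq //; case: (_ \in _).
Qed.

Lemma count_ge k a n : count (fun s => k <= s) (iota a n) = (a + n) - maxn a k.
Proof.
elim: n a => [|n IH] a /=; first by lia.
rewrite IH; case: (leqP k a) => ka /=; lia.
Qed.

Lemma count_split (T : Type) (a : pred T) (f : T -> nat) K s :
  count (fun x => a x && (f x < K.+1)) s =
  count (fun x => a x && (f x < K)) s + count (fun x => a x && (f x == K)) s.
Proof.
elim: s => //= x s ->.
case: (a x) => //=; case: (ltngtP (f x) K) => h /=; try lia.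
Qed.

Lemma count_bound (T : Type) (a : pred T) (f : T -> nat) B s :
  (forall v, count (fun x => a x && (f x == v)) s <= B) ->
  forall K, count (fun x => a x && (f x < K)) s <= K * B.
Proof.
move=> H; elim=> [|K IH].
  by rewrite (@eq_count _ _ pred0) ?count_pred0 // => x; rewrite ltn0 andbF.
rewrite count_split mulSn addnC; apply: leq_add => //.
Qed.

Open Scope ring_scope.
Open Scope ring_scope.

Lemma sum_const_int (I : Type) (s : seq I) (C : pred I) (c : int) :
  \sum_(p <- s | C p) c = (count C s)%:Z * c.
Proof.
elim: s => [|x s IH]; first by rewrite big_nil mul0r.
rewrite big_cons IH /=; case: (C x) => /=; lia.
Qed.

Lemma sum_window (F : nat -> int) a b n : (a <= b <= n)%N ->
  \sum_(a <= k < b) F k = \sum_(0 <= k < n | (a <= k)%N && (k < b)%N) F k.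
Proof.
move=> /andP [ab bn].
rewrite [RHS]big_mkcond (big_cat_nat (leq0n a) (leq_trans ab bn)) (big_cat_nat ab bn) /=.
have -> : \sum_(0 <= i < a) (if (a <= i)%N && (i < b)%N then F i else 0) = 0.
  apply: big1_seq => k; rewrite mem_index_iota => kr.
  by rewrite (_ : (a <= k)%N = false) //; lia.
have -> : \sum_(b <= i < n) (if (a <= i)%N && (i < b)%N then F i else 0) = 0.
  apply: big1_seq => k; rewrite mem_index_iota => kr.
  by rewrite (_ : (k < b)%N = false) ?andbF //; lia.
rewrite add0r addr0; apply: eq_big_nat => k kr; by rewrite (_ : (a <= k)%N && (k < b)%N = true) //; lia.
Qed.

Lemma final_count l t disp (T : orderType disp) (Q : seq (entry T)) :
  (0 < l)%N -> (0 < t)%N -> Inv l t t t 0 (vw 0 Q) ->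
  (forall Q'', ~ del_step t Q Q'') ->
  (num_type2 t Q <= 24 * l * (trunc_log 2 t).+1)%N.
Proof.
move=> l0 t0 [H1 H2 H3 H4 H5] ND.
set n := size Q.
have szV : size (vw 0 Q) = n by rewrite vw_size.
have F1 k : (k < n)%N -> 0 <= gQ Q k.
  by move=> kn; have := (all_nthP (0, 0, 0%N) H1 k); rewrite szV nth_vw //; apply.
have F3 k : (k < n)%N -> DeltaQ Q k + 1 <= (maxn (et0 (Q_at Q k)) 1)%:Z.
  by move=> kn; have := (all_nthP (0, 0, 0%N) H3 k); rewrite szV nth_vw //; apply.
have F4 k : (k < n)%N -> (et0 (Q_at Q k) <= t)%N.
  by move=> kn; have := (all_nthP (0, 0, 0%N) H4 k); rewrite szV nth_vw //; apply.
have WE v : Wsum (vw 0 Q) t v = \sum_(0 <= k < n | (bandQ t Q k <= v)%N) gQ Q k.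
  rewrite /Wsum (big_nth (0, 0, 0%N)) szV big_nat_cond [RHS]big_nat_cond.
  apply: eq_big => k.
    case: (ltnP k n) => kn; rewrite ?andbF ?andbT //= ?nth_vw //.
  by move=> /andP [/andP [_ kn] _]; rewrite nth_vw.
have WB v : Wsum (vw 0 Q) t v <= (1 + l * 2 ^ v.+1)%N%:Z.
  apply: (le_trans (H5 v)); rewrite addn0 lez_nat /Bnd.
  apply: leq_add; first by apply: leq_b1.
  rewrite leq_mul2l; apply/orP; right.
  apply: (@leq_trans (count (fun s => t.+1 - 2 ^ v.+1 <= s)%N (iota 1 t))).
    apply: sub_in_count => s; rewrite mem_iota => sr bs.
    have := band_up (_ : (s <= t)%N); move=> /(_ ltac:(lia)).
    have : (2 ^ (band s t).+1 <= 2 ^ v.+1)%N by rewrite leq_exp2l.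
    lia.
  rewrite count_ge; lia.
pose b k := bandQ t Q k.
pose ss p := segstart t Q p.
pose wt p := \sum_(ss p <= k < p.+2) gQ Q k.
have ssp p : (ss p <= p)%N by apply: leq_subr.
have WT p : (p.+1 < n)%N -> (b p <= b p.+1)%N -> t%:Z < wt p + DeltaQ Q p.+1.
  move=> pn bp; rewrite ltNge; apply/negP => C.
  apply: (ND (take (ss p) Q ++ drop p.+1 Q)); exists p; split => //.
  rewrite /wt !big_nat_recr //= in C; last by apply: leqW.
  by move: C; rewrite /gstarQ -/(ss p) [gQ Q p + _]addrC.
have Pow p : (p.+1 < n)%N -> (b p <= b p.+1)%N -> (2 ^ b p.+1)%:Z <= 2 * wt p.
  move=> pn bp; have := WT p pn bp; have := F3 _ pn; have := F4 _ pn.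
  have := band_low (F4 _ pn); rewrite -/(bandQ t Q p.+1) -/(b p.+1) -mul2n.
  set s := et0 (Q_at Q p.+1); set e := (2 ^ b p.+1)%N; move=> h1 h2 h3 h4.
  have h1' : e%:Z <= (2 * (t - s)).+1%N%:Z by rewrite lez_nat.
  lia.
have CV v : (count (fun p => ~~ (b p.+1 < b p)%N && (b p.+1 == v)) (iota 0 n.-1) <= 12 * l)%N.
  set S := (fun p => _ && _); set P := iota 0 n.-1.
  pose I p k := (ss p <= k)%N && (k < p.+2)%N.
  have Pn p : p \in P -> (p.+1 < n)%N by rewrite mem_iota; lia.
  have Sb p : S p -> (b p <= b p.+1)%N /\ b p.+1 = v.
    by rewrite /S => /andP [h /eqP E]; split => //; rewrite leqNgt.
  have step1 : (count S P)%:Z * (2 ^ v)%:Z <= \sum_(p <- P | S p) 2 * wt p.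
    rewrite -sum_const_int big_seq_cond [X in _ <= X]big_seq_cond.
    apply: ler_sum => p /andP [pP Sp]; have [bp bv] := Sb p Sp; rewrite -bv.
    exact: Pow (Pn p pP) bp.
  have step2 : \sum_(p <- P | S p) wt p =
      \sum_(p <- P | S p) \sum_(0 <= k < n | I p k) gQ Q k.
    rewrite big_seq_cond [RHS]big_seq_cond; apply: eq_bigr => p /andP [pP _].
    rewrite /wt (@sum_window _ _ _ n) //; have := Pn p pP; have := ssp p; lia.
  have step3 : \sum_(p <- P | S p) \sum_(0 <= k < n | I p k) gQ Q k =
      \sum_(0 <= k < n) \sum_(p <- P | S p && I p k) gQ Q k.
    exact: (exchange_big_dep predT).
  have step4 : \sum_(0 <= k < n) \sum_(p <- P | S p && I p k) gQ Q k <=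
      \sum_(0 <= k < n | (b k <= v)%N) 2 * gQ Q k.
    rewrite [X in _ <= X]big_mkcond; apply: ler_sum_nat => k /andP [_ kn].
    rewrite sum_const_int.
    case: (posnP (count (fun p => S p && I p k) P)) => c0.
      rewrite c0 mul0r; case: ifP => // _; have := F1 k kn; lia.
    have := c0; rewrite -has_count => /hasP [p pP /andP [Sp Ipk]].
    have [bp bv] := Sb p Sp.
    have -> : (b k <= v)%N.
      rewrite -bv; apply: seg_le => //; first exact: Pn.
    have c2 : (count (fun p => S p && I p k) P <= 2)%N.
      apply: count_le2 => p1 q1 _ pq qn' /andP [Sp1 Ip1] /andP [Sq1 Iq1].
      case: (ltnP q1 p1.+2) => qp; first by lia.
      exfalso.
      have [bp1 bv1] := Sb p1 Sp1; have [bq1 bv2] := Sb q1 Sq1.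
      have qn : (q1 <= n)%N by lia.
      have := @seg_band _ _ t Q q1 p1.+1 qn.
      rewrite (_ : (segstart t Q q1 <= p1.+1 < q1)%N = true); last first.
        by move: Iq1 Ip1; rewrite /I /ss; lia.
      move=> /(_ isT); change ((b p1.+1 < b q1)%N -> False); lia.
    have g0 := F1 k kn.
    have : (count (fun p => S p && I p k) P)%:Z <= 2 by rewrite lez_nat.
    move=> h; apply: ler_wpM2r => //.
  have step5 : \sum_(0 <= k < n | (b k <= v)%N) 2 * gQ Q k = 2 * Wsum (vw 0 Q) t v.
    by rewrite WE mulr_sumr.
  have step6 : \sum_(p <- P | S p) 2 * wt p = 2 * \sum_(p <- P | S p) wt p.
    by rewrite mulr_sumr.
  have X0 : (0 < 2 ^ v)%N by rewrite expn_gt0.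
  have : (count S P * 2 ^ v <= 4 + 8 * l * 2 ^ v)%N.
    have := WB v; rewrite expnS; move: step1 step4; rewrite step6 step2 step3 step5.
    set W := Wsum _ _ _; set Z := \sum_(_ <= _ < _) _; move=> h1 h2 h3.
    rewrite -lez_nat; lia.
  move=> h; rewrite -(leq_pmul2r X0); nia.
set L := trunc_log 2 t.
have bL p : (p.+1 < n)%N -> (b p.+1 < L.+2)%N.
  move=> pn; have st := F4 _ pn.
  have h1 := band_low st.
  have h2 : (t < 2 ^ L.+1)%N by apply: trunc_log_ltn.
  rewrite -(@ltn_exp2l 2) // (expnS 2 L.+1).
  change (band (et0 (Q_at Q p.+1)) t) with (b p.+1) in h1.
  rewrite -mul2n in h1; lia.
rewrite /num_type2 -/n.
rewrite (@eq_in_count _ _ (fun p => ~~ (b p.+1 < b p)%N && (b p.+1 < L.+2)%N)); last first.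
  move=> p; rewrite mem_iota => pr; rewrite bL ?andbT //; lia.
apply: leq_trans (@count_bound _ (fun p => ~~ (b p.+1 < b p)%N) (fun p => b p.+1) (12 * l) _ CV L.+2) _.
nia.
Qed.

Close Scope ring_scope.

Theorem mainTheorem7 :
  exists C : nat,
    forall (disp : Order.disp_t) (T : orderType disp) (l : nat)
           (stream : nat -> T) (Qs : nat -> seq (entry T)),
      0 < l -> valid_run l stream Qs ->
      forall t : nat, 0 < t ->
        num_type2 t (Qs t) <= C * l * (trunc_log 2 t).+1.
Proof.
exists 24 => disp T l stream Qs l0 VR t t0.
have I := Inv_run VR t.
rewrite (_ : maxn t 1 = t) in I; last by lia.
have [_ ND] := VR.2 t t0.
exact: final_count l0 t0 I ND.
Qed.
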